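(* For all words $z\in\{0,1\}^*$ and all integers $k\geq 1$, \[V([z10^k1]_F)=\begin{cases} V([z10^{k+1}]_F), & \text{if } k \text{ is odd};\\ V([z10^k]_F)+V([z(01)^{k/2}]_F), & \text{if } k \text{ is even}.\end{cases}\]
   Context: Fibonacci numbers: $F_0=0$, $F_1=1$, $F_{m+2}=F_{m+1}+F_m$. For a word $k_m\cdots k_0$ of nonnegative integer digits, $[k_m\cdots k_0]_F=\sum_{i=0}^m k_iF_{i+2}$; $u^j$ denotes $j$ concatenated copies of $u$. Standard Fibonacci words: $f_{-1}=b$, $f_0=a$, $f_{m+1}=f_mf_{m-1}$. The Fibonacci word ${\bf f}=\lim f_m$, with prefix of length $j$ denoted ${\bf f}(0..j]$. $V(N)$ is the number of factorizations of ${\bf f}(0..N]$ as $f_m^{k_m}\cdots f_0^{k_0}$ with all $k_i\geq 0$ (into standard words $f_i$, $i\geq0$, in non-strictly decreasing order of index), counted up to leading zero exponents; $V(0)=1$. *)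

(* Defs.v *)
From mathcomp Require Import all_boot.
Set Implicit Arguments. Unset Strict Implicit. Unset Printing Implicit Defensive.

Fixpoint fib (n : nat) : nat :=
  match n with
  | 0 => 0
  | 1 => 1
  | (m.+1 as p).+1 => fib p + fib m
  end.

(* [k_m ... k_0]_F = sum_i k_i F_{i+2}; the word is written most significant
   digit first, so k_i is the i-th letter of the reversed word. *)
Definition fibval (w : seq nat) : nat :=
  \sum_(i < size w) nth 0 (rev w) i * fib i.+2.

(* Letters: a = false, b = true. *)
Definition la : bool := false.
Definition lb : bool := true.

(* Standard Fibonacci words: fibw m = f_m for m >= 0,
   f_0 = a, f_1 = f_0 f_{-1} = ab, f_{m+2} = f_{m+1} f_m. *)
Fixpoint fibw (m : nat) : seq bool :=
  match m with
  | 0 => [:: la]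
  | 1 => [:: la; lb]
  | (p.+1 as q).+1 => fibw q ++ fibw p
  end.

(* The infinite Fibonacci word f = lim f_m, as a function of positions
   (f_i has length F_{i+2} > i and f_m is a prefix of f_{m+1}). *)
Definition fibinf (i : nat) : bool := nth la (fibw i) i.

Definition fibpref (N : nat) : seq bool := mkseq fibinf N.

Definition factword (N : nat) (k : {ffun 'I_N -> 'I_N.+1}) : seq bool :=
  flatten [seq flatten (nseq (k i) (fibw i)) | i <- rev (enum 'I_N)].

(* V(N): number of factorizations f(0..N] = f_m^{k_m} ... f_0^{k_0}, counted
   up to leading zero exponents.  Every such factorization has k_i = 0 for
   i >= N (since |f_i| = F_{i+2} > N there) and k_i <= N, so factorizations
   correspond exactly to exponent vectors k : 'I_N -> 'I_N.+1. *)
Definition V (N : nat) : nat :=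
  #|[pred k : {ffun 'I_N -> 'I_N.+1} | factword k == fibpref N]|.

(* Main.v *)
Require Import Defs.
From mathcomp Require Import all_boot.
From mathcomp Require Import zify.
From Stdlib Require Import Classical.
Set Implicit Arguments. Unset Strict Implicit. Unset Printing Implicit Defensive.

Definition phic (c : bool) : seq bool := if c then [:: false] else [:: false; true].
Definition phi (w : seq bool) : seq bool := flatten (map phic w).

Lemma phi_cons c w : phi (c :: w) = phic c ++ phi w. Proof. by []. Qed.
Lemma phi_cat u v : phi (u ++ v) = phi u ++ phi v.
Proof. by rewrite /phi map_cat flatten_cat. Qed.

Lemma size_phi_ge w : size w <= size (phi w).
Proof. elim: w => //= c w IH; rewrite phi_cons size_cat; case: c => /=; lia. Qed.

Lemma size_phi_cons_a w : size (phi (false :: w)) = (size w).+1 + (size (phi w) - size w) + 1.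
Proof. rewrite phi_cons size_cat /=. have := size_phi_ge w. lia. Qed.

Lemma phi_head w t : phi w <> true :: t.
Proof. by case: w => [|[] w]. Qed.

Lemma phi_inj : injective phi.
Proof.
elim=> [|c u IH] [|d v] //=.
- by case: d.
- by case: c.
- rewrite !phi_cons; case: c; case: d => /=.
  + by case=> /IH ->.
  + by case=> /phi_head.
  + by case=> /esym /phi_head.
  + by case=> /IH ->.
Qed.

Lemma catIr (s1 s2 t : seq bool) : s1 ++ t = s2 ++ t -> s1 = s2.
Proof.
move=> H; have := congr1 size H; rewrite !size_cat => /addIn Hs.
by move/eqP: H; rewrite eqseq_cat // => /andP [/eqP].
Qed.

Lemma phi_nobb y w : phi y <> w ++ [:: true; true].
Proof.
elim/last_ind: y w => [|y c _] w.
- by case: w.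
- rewrite -cats1 phi_cat => /(congr1 rev); rewrite !rev_cat; case: c => //=.
Qed.

Fixpoint fw (s : seq nat) : seq bool :=
  if s is x :: s' then phi (fw s') ++ nseq x false else [::].

Lemma fw_head s t : fw s <> true :: t.
Proof.
case: s => [|x s] //=.
case E: (fw s) => [|c w]; first by case: x.
by rewrite phi_cons; case: (c) E.
Qed.

Fixpoint cntL (m L : nat) (Q : seq nat -> bool) : nat :=
  if m is m'.+1 then \sum_(x < L) cntL m' L (fun s => Q ((x : nat) :: s)) else Q [::].
Definition Cnt m L (u : seq bool) := cntL m L (fun s => fw s == u).

Lemma cntL_ext m L Q1 Q2 : (forall s, Q1 s = Q2 s) -> cntL m L Q1 = cntL m L Q2.
Proof.
elim: m Q1 Q2 => [|m IH] Q1 Q2 H /=; first by rewrite H.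
apply: eq_bigr => x _; apply: IH => s; exact: H.
Qed.

Lemma cntL_false m L Q : (forall s, Q s = false) -> cntL m L Q = 0.
Proof.
elim: m Q => [|m IH] Q H /=; first by rewrite H.
rewrite big1 // => x _; apply: IH => s; exact: H.
Qed.

Lemma CntS m L u :
  Cnt m.+1 L u = \sum_(x < L) cntL m L (fun s => phi (fw s) ++ nseq x false == u).
Proof. by []. Qed.

Lemma term_sol m L x u v : phi v ++ nseq x false = u ->
  cntL m L (fun s => phi (fw s) ++ nseq x false == u) = Cnt m L v.
Proof.
move=> <-; apply: cntL_ext => s.
apply/eqP/eqP => [/catIr/phi_inj // | -> //].
Qed.

Lemma term_nosol m L x u : (forall v, phi v ++ nseq x false <> u) ->
  cntL m L (fun s => phi (fw s) ++ nseq x false == u) = 0.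
Proof. move=> H; apply: cntL_false => s; apply/eqP; exact: H. Qed.

Lemma Cnt_b m L t : Cnt m L (true :: t) = 0.
Proof. apply: cntL_false => s; apply/eqP; exact: fw_head. Qed.

Lemma Cnt0_nil L : Cnt 0 L [::] = 1. Proof. by []. Qed.

Lemma sol_size v x u : phi v ++ nseq x false = u -> size v + x <= size u.
Proof. move=> <-; rewrite size_cat size_nseq; have := size_phi_ge v; lia. Qed.

Lemma stabL m (u : seq bool) L : size u < L -> Cnt m L.+1 u = Cnt m L u.
Proof.
elim: m u => [|m IH] u HL //.
rewrite !CntS big_ord_recr /=.
rewrite term_nosol; last by move=> v /sol_size /=; lia.
rewrite addn0; apply: eq_bigr => x _ /=.
case: (classic (exists v, phi v ++ nseq x false = u)) => [[v Hv]|Hn].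
- rewrite !(term_sol _ _ Hv); apply: IH; have := sol_size Hv; lia.
- rewrite !term_nosol // => v Hv; apply: Hn; by exists v.
Qed.

Lemma stabM m (u : seq bool) L : size u <= m -> size u < L -> Cnt m.+1 L u = Cnt m L u.
Proof.
elim: m u => [|m IH] u Hm HL.
- case: u Hm HL => // _ HL.
  rewrite CntS /=; case: L HL => // L _.
  rewrite big_ord_recl /= big1 // => x _ /=.
- rewrite (CntS m.+1) (CntS m); apply: eq_bigr => x _.
  case: (classic (exists v, phi v ++ nseq x false = u)) => [[v Hv]|Hn].
  + rewrite !(term_sol _ _ Hv).
    have Hs := sol_size Hv.
    case: (leqP (size v) m) => Hvm; first by apply: IH; lia.
    case: v Hv Hs Hvm => [|[] v] Hv Hs Hvm; first by [].
    * by rewrite !Cnt_b.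
    * exfalso; move: Hv => /(congr1 size); rewrite size_cat size_nseq.
      rewrite phi_cons size_cat /=; have := size_phi_ge v; move: Hs Hm Hvm => /=; lia.
  + rewrite !term_nosol // => v Hv; apply: Hn; by exists v.
Qed.

Definition C (u : seq bool) := Cnt (size u) (size u).+1 u.

Lemma CntE m L (u : seq bool) : size u <= m -> size u < L -> Cnt m L u = C u.
Proof.
move=> Hm HL.
have HL' : forall d, Cnt m ((size u).+1 + d) u = Cnt m (size u).+1 u.
  elim=> [|d IHd]; first by rewrite addn0.
  rewrite addnS stabL ?IHd //; lia.
have -> : Cnt m L u = Cnt m (size u).+1 u.
  by rewrite -(HL' (L - (size u).+1)); congr Cnt; lia.
have HM : forall e, Cnt (size u + e) (size u).+1 u = C u.
  elim=> [|e IHe]; first by rewrite addn0.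
  rewrite addnS stabM ?IHe //; lia.
by rewrite -(HM (m - size u)); congr Cnt; lia.
Qed.

Lemma last_nseqS (x c : bool) n : last x (nseq n.+1 c) = c.
Proof. by elim: n. Qed.

Lemma nseqSr (c : bool) n : nseq n.+1 c = rcons (nseq n c) c.
Proof. by elim: n => //= n ->. Qed.

Lemma C_phia w : C (phi w ++ [:: false]) = C (phi w) + C (w ++ [:: true]).
Proof.
set n := size (phi w ++ [:: false]).
have Hn : n = (size (phi w)).+1 by rewrite /n size_cat addn1.
rewrite -(CntE (m:=n.+1) (L:=n.+1)) // CntS big_ord_recl.
rewrite (@term_sol _ _ _ _ (w ++ [:: true])); last by rewrite cats0 phi_cat.
rewrite CntE; last 2 first.
- rewrite size_cat /= Hn; have := size_phi_ge w; lia.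
- rewrite size_cat /= Hn; have := size_phi_ge w; lia.
rewrite addnC; congr (_ + _).
rewrite -(CntE (m:=n.+1) (L:=n.+1) (u:=phi w)); last 2 first.
- lia.
- lia.
rewrite CntS big_ord_recr /= term_nosol; last first.
  move=> v /sol_size; lia.
rewrite addn0; apply: eq_bigr => i _ /=; apply: cntL_ext => s.
by rewrite add0n -[false :: _]/(nseq i.+1 false) nseqSr -rcons_cat cats1 eqseq_rcons eqxx andbT.
Qed.

Lemma C_phi_a w : C (phi (w ++ [:: false])) = C (w ++ [:: false]).
Proof.
set n := size (phi (w ++ [:: false])).
rewrite -(CntE (m:=n.+1) (L:=n.+1)) // CntS big_ord_recl.
rewrite (@term_sol _ _ _ _ (w ++ [:: false])); last by rewrite cats0.
rewrite CntE; last 2 first.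
- rewrite /n; exact: size_phi_ge.
- rewrite /n; have := size_phi_ge (w ++ [:: false]); lia.
rewrite big1 ?addn0 // => i _; apply: term_nosol => v.
rewrite phi_cat /= => /(congr1 (last true)).
by rewrite !last_cat last_nseqS.
Qed.

Lemma C_bb w : C (w ++ [:: true; true]) = 0.
Proof.
set n := size (w ++ [:: true; true]).
rewrite -(CntE (m:=n.+1) (L:=n.+1)) // CntS big1 // => [[[|i] Hi]] _.
- apply: term_nosol => v; rewrite cats0; exact: phi_nobb.
- apply: term_nosol => v /(congr1 (last true)).
  by rewrite !last_cat last_nseqS.
Qed.
Definition vals m L (k : {ffun 'I_m -> 'I_L}) : seq nat := [seq (k i : nat) | i <- enum 'I_m].

Definition consf m L (x : 'I_L) (k : {ffun 'I_m -> 'I_L}) : {ffun 'I_m.+1 -> 'I_L} :=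
  [ffun i => if unlift ord0 i is Some j then k j else x].
Definition tailf m L (k : {ffun 'I_m.+1 -> 'I_L}) : 'I_L * {ffun 'I_m -> 'I_L} :=
  (k ord0, [ffun j => k (lift ord0 j)]).

Lemma vals_cons m L x (k : {ffun 'I_m -> 'I_L}) : vals (consf x k) = (x : nat) :: vals k.
Proof.
rewrite /vals enum_ordSl /= ffunE unlift_none -map_comp; congr (_ :: _).
by apply: eq_map => j /=; rewrite ffunE liftK.
Qed.

Lemma sum_cntL m L (Q : seq nat -> bool) :
  \sum_(k : {ffun 'I_m -> 'I_L}) (Q (vals k) : nat) = cntL m L Q.
Proof.
elim: m Q => [|m IH] Q /=.
- have E : forall k : {ffun 'I_0 -> 'I_L}, vals k = [::].
    by move=> k; rewrite /vals; have := size_enum_ord 0; case: (enum 'I_0).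
  rewrite (eq_bigr (fun _ => (Q [::] : nat))); last by move=> k _; rewrite E.
  by rewrite sum_nat_const card_ffun (card_ord 0) expn0 mul1n.
- rewrite (reindex (fun p : 'I_L * {ffun 'I_m -> 'I_L} => consf p.1 p.2)) /=.
    rewrite -(pair_bigA _ (fun x k => (Q (vals (consf x k)) : nat))) /=.
    apply: eq_bigr => x _; rewrite -IH; apply: eq_bigr => k _.
    by rewrite vals_cons.
  apply: onW_bij; exists (@tailf m L).
  + case=> x k; rewrite /tailf /= ffunE unlift_none; congr pair.
    by apply/ffunP => j; rewrite !ffunE liftK.
  + move=> k; apply/ffunP => i; rewrite ffunE /=.
    by case: unliftP => [j ->|->] /=; rewrite ?ffunE.
Qed.

Lemma card_cntL m L (Q : seq nat -> bool) :
  #|[pred k : {ffun 'I_m -> 'I_L} | Q (vals k)]| = cntL m L Q.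
Proof.
rewrite -sum_cntL -sum1_card big_mkcond /=; apply: eq_bigr => k _.
by rewrite inE; case: (Q _).
Qed.

Lemma fibw_phi i : fibw i.+1 = phi (fibw i).
Proof.
suff H : forall i, fibw i.+1 = phi (fibw i) /\ fibw i.+2 = phi (fibw i.+1) by case: (H i).
elim=> [|j [IH1 IH2]]; first by split.
split => //.
rewrite [fibw j.+3]/= -/(fibw j.+2) -/(fibw j.+1).
by rewrite phi_cat -IH1 -IH2.
Qed.

Lemma phi_flatten ss : phi (flatten ss) = flatten (map phi ss).
Proof. by elim: ss => //= s ss IH; rewrite phi_cat IH. Qed.

Lemma phi_nseqflat n w : phi (flatten (nseq n w)) = flatten (nseq n (phi w)).
Proof. by elim: n => //= n IH; rewrite phi_cat IH. Qed.

Lemma flatten_nseq1 n (c : bool) : flatten (nseq n [:: c]) = nseq n c.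
Proof. by elim: n => //= n ->. Qed.

Lemma fw_flat s : fw s =
  flatten [seq flatten (nseq (nth 0 s i) (fibw i)) | i <- rev (iota 0 (size s))].
Proof.
elim: s => // x s IH.
rewrite [fw _]/= IH /= rev_cons map_rcons flatten_rcons /= flatten_nseq1.
congr (_ ++ _).
rewrite phi_flatten -(add0n 1) (iotaDl 1 0) -map_rev -!map_comp.
apply: (congr1 flatten); apply: eq_map => i /=.
by rewrite phi_nseqflat -fibw_phi.
Qed.

Lemma factword_fw N (k : {ffun 'I_N -> 'I_N.+1}) : factword k = fw (vals k).
Proof.
rewrite fw_flat /factword /vals size_map size_enum_ord -val_enum_ord.
rewrite -map_rev -map_comp; congr flatten; apply: eq_map => i /=.
by rewrite (nth_map i) ?size_enum_ord // nth_ord_enum.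
Qed.

Lemma V_Cnt N : V N = Cnt N N.+1 (fibpref N).
Proof.
rewrite /V /Cnt -card_cntL; apply: eq_card => k; rewrite !inE.
by rewrite factword_fw.
Qed.

Lemma V_C N : V N = C (fibpref N).
Proof. by rewrite V_Cnt CntE // size_mkseq. Qed.

Definition stepW (w : seq bool) (c : nat) := phi w ++ nseq c false.
Definition W (d : seq nat) := foldl stepW [::] d.

Lemma W_rcons d c : W (rcons d c) = phi (W d) ++ nseq c false.
Proof. by rewrite /W foldl_rcons. Qed.

Definition fv s (d : seq nat) := \sum_(i < size d) nth 0 (rev d) i * fib (i + s).

Lemma fibval_fv d : fibval d = fv 2 d.
Proof. by rewrite /fibval /fv; apply: eq_bigr => i _; rewrite addn2. Qed.

Lemma fv_rcons s d c : fv s (rcons d c) = c * fib s + fv s.+1 d.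
Proof.
rewrite /fv size_rcons big_ord_recl rev_rcons; congr (_ + _).
apply: eq_bigr => i _; by rewrite lift0 addSnnS.
Qed.

Lemma fv_rec s d : fv s.+2 d = fv s.+1 d + fv s d.
Proof.
rewrite /fv -big_split /=; apply: eq_bigr => i _.
by rewrite !addnS /= mulnDr.
Qed.

Lemma size_phi w : size (phi w) = size w + count_mem false w.
Proof. elim: w => //= c w IH; rewrite phi_cons size_cat IH; case: c => /=; lia. Qed.

Lemma count_phi w : count_mem false (phi w) = size w.
Proof. elim: w => //= c w IH; rewrite phi_cons count_cat IH; case: c => /=; lia. Qed.

Lemma W_size d : size (W d) = fv 2 d /\ count_mem false (W d) = fv 1 d.
Proof.
elim/last_ind: d => [|d c [IH1 IH2]]; first by rewrite /fv !big_ord0.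
rewrite W_rcons !fv_rcons size_cat count_cat size_nseq count_nseq size_phi count_phi.
rewrite fv_rec IH1 IH2 /=; lia.
Qed.

Lemma fibval_W d : fibval d = size (W d).
Proof. by rewrite fibval_fv (proj1 (W_size d)). Qed.

Lemma fibwSS n : fibw n.+2 = fibw n.+1 ++ fibw n. Proof. by []. Qed.

Lemma size_fibw n : n < size (fibw n).
Proof.
suff H : forall n, n < size (fibw n) /\ n.+1 < size (fibw n.+1) by case: (H n).
elim=> [|j [IH1 IH2]]; first by split.
split => //; rewrite fibwSS size_cat; lia.
Qed.

Lemma fibw_nonnil n : fibw n != [::].
Proof. by rewrite -size_eq0 -lt0n (leq_ltn_trans (leq0n n) (size_fibw n)). Qed.

Lemma fibw_ext n : exists s, s != [::] /\ fibw n.+1 = fibw n ++ s.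
Proof.
case: n => [|n]; first by exists [:: true].
by exists (fibw n); rewrite fibw_nonnil.
Qed.

Lemma fibw_prefix m n : m <= n -> exists t, fibw n = fibw m ++ t.
Proof.
elim: n => [|n IH]; first by rewrite leqn0 => /eqP ->; exists [::]; rewrite cats0.
rewrite leq_eqVlt => /orP [/eqP ->|]; first by exists [::]; rewrite cats0.
rewrite ltnS => /IH [t Ht]; have [s [_ Hs]] := fibw_ext n.
by exists (t ++ s); rewrite Hs Ht catA.
Qed.


Lemma fibinf_nth n j : j < size (fibw n) -> fibinf j = nth false (fibw n) j.
Proof.
move=> Hj; rewrite /fibinf.
have [t1 H1] := fibw_prefix (leq_maxl j n).
have [t2 H2] := fibw_prefix (leq_maxr j n).
have := congr1 (fun s => nth false s j) H1; rewrite H2 !nth_cat Hj size_fibw /=.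
by move=> ->.
Qed.

Lemma fibpref_take N n : N <= size (fibw n) -> fibpref N = take N (fibw n).
Proof.
move=> HN; apply: (@eq_from_nth _ false).
  by rewrite size_mkseq size_take; case: ltnP HN => //; lia.
move=> i; rewrite size_mkseq => Hi.
rewrite nth_mkseq // nth_take //; apply: fibinf_nth; lia.
Qed.

Lemma pref_ext (w : seq bool) : (exists n t, fibw n = w ++ t) ->
  exists n t, t != [::] /\ fibw n = w ++ t.
Proof.
case=> n [t Ht]; have [s [Hs E]] := fibw_ext n.
exists n.+1, (t ++ s); rewrite E Ht catA; split => //.
by case: t {Ht} => //.
Qed.

Lemma W_pref d : all (fun c => c <= 1) d -> exists n t, fibw n = W d ++ t.
Proof.
elim/last_ind: d => [|d c IH]; first by move=> _; exists 0, [:: false].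
rewrite all_rcons => /andP [Hc /IH /pref_ext [n [t [Ht E]]]].
case: t Ht E => // x t _ E.
exists n.+1; rewrite fibw_phi E phi_cat phi_cons W_rcons.
case: c Hc => [|[|//]] _.
- by exists (phic x ++ phi t); rewrite cats0.
- by exists (behead (phic x) ++ phi t); case: x {E} => /=; rewrite -catA.
Qed.

Lemma fibpref_W d : all (fun c => c <= 1) d -> fibpref (fibval d) = W d.
Proof.
case/W_pref => n [t E]; rewrite fibval_W (@fibpref_take _ n).
  by rewrite E take_size_cat.
by rewrite E size_cat leq_addr.
Qed.

Lemma V_W d : all (fun c => c <= 1) d -> V (fibval d) = C (W d).
Proof. by move=> H; rewrite V_C fibpref_W. Qed.

Lemma W_cat d e : W (d ++ e) = foldl stepW (W d) e.
Proof. by rewrite /W foldl_cat. Qed.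

Lemma foldl_zeros w k : foldl stepW w (nseq k 0) = iter k phi w.
Proof.
elim: k w => // k IH w /=; rewrite IH /stepW cats0 -iterS; by rewrite iterSr.
Qed.

Lemma iter_phi_cat k u v : iter k phi (u ++ v) = iter k phi u ++ iter k phi v.
Proof. by elim: k => //= k ->; rewrite phi_cat. Qed.

Lemma iter_phi_a k : iter k phi [:: false] = fibw k.
Proof. by elim: k => // k IH; rewrite iterS IH fibw_phi. Qed.

Fixpoint H j := if j is j'.+1 then fibw (j'.*2) ++ H j' else [::].
Arguments H : simpl never.

Lemma foldl_01 j w :
  foldl stepW w (flatten (nseq j [:: 0; 1])) = iter (j.*2) phi w ++ H j.
Proof.
elim: j w => [|j IH] w /=; first by rewrite cats0.
rewrite IH /stepW cats0 iter_phi_cat iter_phi_a catA.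
by rewrite -!iterS !iterSr.
Qed.

Lemma H1 j : fibw (j.*2).+1 = H j.+1 ++ [:: true].
Proof.
elim: j => [|j IH] //.
by rewrite doubleS fibwSS IH -[H j.+2]/(fibw (j.+1).*2 ++ H j.+1) doubleS catA.
Qed.

Lemma H2 j : exists g, H j.+1 = phi (g ++ [:: true]).
Proof.
elim: j => [|j [g IH]]; first by exists [::].
exists (fibw (j.*2).+1 ++ g).
rewrite -[H j.+2]/(fibw (j.+1).*2 ++ H j.+1) IH phi_cat doubleS fibw_phi.
by rewrite !phi_cat catA.
Qed.

Lemma W_1z z k : W (z ++ [:: 1] ++ nseq k 0) = iter k.+1 phi (W z) ++ fibw k.
Proof.
rewrite W_cat /= foldl_zeros /stepW iter_phi_cat iter_phi_a.
by rewrite -iterSr.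
Qed.

Lemma W_1z1 z k :
  W (z ++ [:: 1] ++ nseq k 0 ++ [:: 1]) = phi (W (z ++ [:: 1] ++ nseq k 0)) ++ [:: false].
Proof. by rewrite catA catA cats1 W_rcons -catA. Qed.

Lemma bin_map z : all (fun c => c <= 1) (map nat_of_bool z).
Proof. by elim: z => //= c z ->; rewrite leq_b1. Qed.

Theorem proposition4 (z : seq bool) (k : nat) : 0 < k ->
  let z' := map nat_of_bool z in
  V (fibval (z' ++ [:: 1] ++ nseq k 0 ++ [:: 1])) =
  if odd k then V (fibval (z' ++ [:: 1] ++ nseq k.+1 0))
  else V (fibval (z' ++ [:: 1] ++ nseq k 0))
       + V (fibval (z' ++ flatten (nseq k./2 [:: 0; 1]))).
Proof.
move=> Hk z'.
have Bz := bin_map z.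
have B1 : forall e, all (fun c => c <= 1) e -> all (fun c => c <= 1) (z' ++ e).
  by move=> e He; rewrite all_cat Bz He.
have Bn : forall n, all (fun c => c <= 1) (nseq n 0) by elim.
rewrite V_W; last by apply: B1; rewrite /= all_cat Bn.
rewrite W_1z1 W_1z.
set X := W z'.
set Y := iter k.+1 phi X ++ fibw k.
have Hkk := odd_double_half k.
case: ifP => Hodd.
- rewrite V_W; last by apply: B1; rewrite /= Bn.
  rewrite W_1z -/X.
  have -> : iter k.+2 phi X ++ fibw k.+1 = phi Y by rewrite /Y phi_cat fibw_phi.
  rewrite C_phia.
  have E : fibw k = H (k./2).+1 ++ [:: true].
    by rewrite -H1; congr fibw; rewrite Hodd in Hkk; lia.
  have -> : Y ++ [:: true] = (iter k.+1 phi X ++ H (k./2).+1) ++ [:: true; true].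
    by rewrite /Y E; move: (H _) => h; rewrite -!catA.
  by rewrite C_bb addn0.
- rewrite V_W; last by apply: B1; rewrite /= Bn.
  rewrite V_W; last first.
    apply: B1; elim: (k./2) => //= j ->; by [].
  rewrite W_1z -/X -/Y W_cat foldl_01 -/X.
  rewrite Hodd /= in Hkk.
  case E: (k./2) Hkk => [|j] Hj; first by move: Hk; rewrite -Hj.
  have [g Hg] := H2 j.
  have Hfk : fibw k = phi (phi (g ++ [:: true])) ++ [:: false].
    by rewrite -Hj doubleS fibw_phi H1 Hg phi_cat.
  rewrite Hg /Y Hfk {Y}.
  rewrite -Hj doubleS in Hfk *.
  set I := iter (j.*2).+1 phi X.
  have -> : iter (j.*2).+3 phi X = phi (phi I) by [].
  have -> : iter (j.*2).+2 phi X = phi I by [].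
  set P := phi (g ++ [:: true]).
  rewrite C_phia catA C_phi_a.
  have -> : ((phi (phi I) ++ phi P) ++ [:: false]) ++ [:: true]
            = phi ((phi I ++ P) ++ [:: false]).
    by rewrite !phi_cat -!catA.
  rewrite C_phi_a; congr (_ + _).
  have -> : phi I ++ P = phi ((I ++ g) ++ [:: true]) by rewrite /P !phi_cat catA.
  rewrite C_phia.
  have -> : ((I ++ g) ++ [:: true]) ++ [:: true] = (I ++ g) ++ [:: true; true] by rewrite -catA.
  by rewrite C_bb addn0.
Qed.
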